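(* For every $d\ge 3$ the cyclic Kautz digraph $CK(d,3)$ satisfies: (a) it is $(d-1)$-regular; (b) it has $N=d^3-d$ vertices and $(d+1)d(d-1)^2$ arcs; (c) its diameter is $5$; (d) it is (isomorphic to) the line digraph of the subKautz digraph $sK(d,2)$, and $sK(d,2)$ is obtained from the Kautz digraph $K(d,2)$ by removing all arcs belonging to digons (directed 2-cycles); (e) it is vertex-transitive; (f) it is Eulerian and Hamiltonian.
   Context: Kautz digraph $K(d,\ell)$: vertices $x_1\ldots x_\ell\in\mathbb Z_{d+1}^\ell$ with $x_i\neq x_{i+1}$; arcs $x_1\ldots x_\ell\to x_2\ldots x_\ell y$ for $y\neq x_\ell$. SubKautz digraph $sK(d,\ell)$: same vertices; arcs $x_1\ldots x_\ell\to x_2\ldots x_\ell x_{\ell+1}$ for $x_{\ell+1}\neq x_1,x_\ell$. Cyclic Kautz digraph $CK(d,\ell)$: vertices $x_1\ldots x_\ell$ with $x_i\neq x_{i+1}$ ($1\le i\le\ell-1$) and $x_\ell\neq x_1$; arcs $x_1\ldots x_\ell\to x_2\ldots x_\ell y$ for $y\neq x_2,x_\ell$. The line digraph $L(G)$ has the arcs of $G$ as vertices, with $(u,v)\to(w,z)$ iff $v=w$. *)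

(* Defs.v *)
From mathcomp Require Import all_boot.
Set Implicit Arguments. Unset Strict Implicit. Unset Printing Implicit Defensive.

Definition outdeg (T : finType) (e : rel T) (v : T) : nat := #|[set w | e v w]|.
Definition indeg (T : finType) (e : rel T) (v : T) : nat := #|[set w | e w v]|.

Definition regular_digraph (T : finType) (e : rel T) (k : nat) : Prop :=
  forall v : T, outdeg e v = k /\ indeg e v = k.

Definition num_arcs (T : finType) (e : rel T) : nat :=
  #|[set p : T * T | e p.1 p.2]|.

Definition walk_of_length (T : finType) (e : rel T) (u v : T) (k : nat) : Prop :=
  exists p : seq T, [/\ path e u p, last u p = v & size p = k].

Definition dist_le (T : finType) (e : rel T) (u v : T) (k : nat) : Prop :=
  exists2 j, j <= k & walk_of_length e u v j.

Definition diameter_is (T : finType) (e : rel T) (D : nat) : Prop :=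
  (forall u v : T, dist_le e u v D) /\
  (exists u v : T, forall j, j < D -> ~ walk_of_length e u v j).

Definition digraph_iso (T1 T2 : finType) (e1 : rel T1) (e2 : rel T2) : Prop :=
  exists f : T1 -> T2, bijective f /\ forall x y, e2 (f x) (f y) = e1 x y.

Definition vertex_transitive (T : finType) (e : rel T) : Prop :=
  forall u v : T, exists f : T -> T,
    [/\ bijective f, (forall x y, e (f x) (f y) = e x y) & f u = v].

Definition line_vertex (T : finType) (e : rel T) : finType :=
  {p : T * T | e p.1 p.2}.
Definition line_arc (T : finType) (e : rel T) : rel (line_vertex e) :=
  fun a b => (val a).2 == (val b).1.

(* arcs traversed by a closed walk given as a cycle c = [:: x0; ...; x_{m-1}] *)
Definition cycle_arcs (T : finType) (c : seq T) : seq (T * T) := zip c (rot 1 c).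

Definition eulerian (T : finType) (e : rel T) : Prop :=
  exists c : seq T, [/\ cycle e c, uniq (cycle_arcs c) &
                        forall x y, e x y -> (x, y) \in cycle_arcs c].

Definition hamiltonian (T : finType) (e : rel T) : Prop :=
  exists c : seq T, [/\ cycle e c, uniq c & forall v : T, v \in c].

(* ---------- Kautz-type digraphs; the alphabet Z_{d+1} is 'I_d.+1 ---------- *)

Definition KV2 (d : nat) : finType := {x : 'I_d.+1 * 'I_d.+1 | x.1 != x.2}.

Definition K2arc (d : nat) : rel (KV2 d) :=
  fun u v => ((val u).2 == (val v).1) && ((val v).2 != (val u).2).

Definition sK2arc (d : nat) : rel (KV2 d) :=
  fun u v => [&& (val u).2 == (val v).1, (val v).2 != (val u).1 & (val v).2 != (val u).2].

Definition K2arc_in_digon (d : nat) (u v : KV2 d) : bool :=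
  [&& K2arc u v, K2arc v u & u != v].

Definition CKV3 (d : nat) : finType :=
  {x : 'I_d.+1 * 'I_d.+1 * 'I_d.+1 | [&& x.1.1 != x.1.2, x.1.2 != x.2 & x.2 != x.1.1]}.

Definition CK3arc (d : nat) : rel (CKV3 d) :=
  fun u v => [&& (val v).1.1 == (val u).1.2, (val v).1.2 == (val u).2,
                 (val v).2 != (val u).1.2 & (val v).2 != (val u).2].

(* Main.v *)
Require Import Defs.
From mathcomp Require Import all_boot all_fingroup.
From mathcomp Require Import path zify.
Set Implicit Arguments. Unset Strict Implicit. Unset Printing Implicit Defensive.

Section Euler.
Variables (T : finType) (e : rel T).

Definition arcsp (v : T) (p : seq T) : seq (T * T) := zip (v :: p) p.

Lemma arcsp_cons v x p : arcsp v (x :: p) = (v, x) :: arcsp x p.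
Proof. by []. Qed.

Lemma size_arcsp v p : size (arcsp v p) = size p.
Proof. by elim: p v => [|x p IH] v //; rewrite arcsp_cons /= IH. Qed.


Lemma arcsp_cat v p1 p2 : arcsp v (p1 ++ p2) = arcsp v p1 ++ arcsp (last v p1) p2.
Proof. by elim: p1 v => [|x p1 IH] v //; rewrite cat_cons !arcsp_cons IH. Qed.

Lemma arcsp_rcons v p y : arcsp v (rcons p y) = rcons (arcsp v p) (last v p, y).
Proof. by rewrite -cats1 arcsp_cat cats1. Qed.

Lemma count_arcsp v p w :
  count (fun a => a.1 == w) (arcsp v p) + (last v p == w)
  = count (fun a => a.2 == w) (arcsp v p) + (v == w).
Proof.
elim: p v => [|x p IH] v; first by [].
rewrite arcsp_cons /= -addnA IH /=; lia.
Qed.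

Lemma mem_arcsp v p a : a \in arcsp v p -> (a.1 \in v :: p) && (a.2 \in p).
Proof.
elim: p v => [|x p IH] v //; rewrite arcsp_cons in_cons => /orP [/eqP -> | /IH].
  by rewrite /= !in_cons !eqxx /= ?orbT.
by case/andP; rewrite !in_cons => -> ->; rewrite !orbT.
Qed.

Lemma path_arcsp v p a : path e v p -> a \in arcsp v p -> e a.1 a.2.
Proof.
elim: p v => [|x p IH] v //; rewrite arcsp_cons in_cons /= => /andP [exy hp].
by case/orP => [/eqP -> // | ]; apply: IH.
Qed.


Definition bal (U : pred (T * T)) := forall w,
  #|[pred a | U a && (a.1 == w)]| = #|[pred a | U a && (a.2 == w)]|.

Lemma count_card (s : seq (T * T)) (P : pred (T * T)) :
  uniq s -> count P s = #|[pred a | (a \in s) && P a]|.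
Proof.
move=> us; rewrite -size_filter; move/card_uniqP: (filter_uniq P us) => <-.
by apply: eq_card => a; rewrite !inE mem_filter andbC.
Qed.

Lemma uniq_size_le (s : seq (T * T)) (U : pred (T * T)) :
  uniq s -> all U s -> size s <= #|U|.
Proof.
move=> us /allP aU; move/card_uniqP: us => <-.
by apply: subset_leq_card; apply/subsetP => a; exact: aU.
Qed.

Lemma step1 (U : pred (T * T)) v : bal U -> (forall a, U a -> e a.1 a.2) ->
  (exists y, U (v, y)) ->
  exists q, [/\ q != [::], path e v q, last v q = v, uniq (arcsp v q) & all U (arcsp v q)].
Proof.
move=> bU eU [y0 Uy0].
suff H: forall k p, #|U| - size p < k -> path e v p -> uniq (arcsp v p) ->
    all U (arcsp v p) ->
    exists q, [/\ q != [::], path e v q, last v q = v, uniq (arcsp v q) & all U (arcsp v q)].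
  by apply: (H #|U|.+1 [::]) => //; rewrite subn0.
elim=> [//|k IH] p hk hp up aU.
case: (boolP ((p != [::]) && (last v p == v))) => [/andP [pn /eqP lv] | hnot].
  by exists p.
set w := last v p.
have: [exists y, U (w, y) && ((w, y) \notin arcsp v p)].
  case: p hnot @w hk hp up aU => [|x p] hnot w hk hp up aU.
    by apply/existsP; exists y0; rewrite Uy0.
  have wv : (w == v) = false by move: hnot; rewrite /= /w => /negbTE.
  apply: contraT => /existsPn H.
  have h1: #|[pred a | U a && (a.1 == w)]| <= count (fun a => a.1 == w) (arcsp v (x :: p)).
    rewrite (count_card _ up); apply: subset_leq_card; apply/subsetP => [[a b]].
    rewrite inE /= => /andP [Uab /eqP Ea]; subst a.
    have := H b; rewrite Uab /= negbK => hb.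
    by apply/andP; split.
  have h2: count (fun a => a.2 == w) (arcsp v (x :: p)) <= #|[pred a | U a && (a.2 == w)]|.
    rewrite (count_card _ up); apply: subset_leq_card; apply/subsetP => a.
    rewrite inE /= => /andP [ain aw]; apply/andP; split => //; exact: (allP aU a ain).
  have h3 := count_arcsp v (x :: p) w.
  rewrite -/w eqxx eq_sym wv in h3.
  have := bU w; lia.
case/existsP => y /andP [Uy ny].
have aU' : all U (arcsp v (rcons p y)) by rewrite arcsp_rcons all_rcons Uy aU.
have up' : uniq (arcsp v (rcons p y)) by rewrite arcsp_rcons rcons_uniq ny up.
apply: (IH (rcons p y)) => //.
  have := uniq_size_le up' aU'; rewrite size_arcsp size_rcons; lia.
by rewrite rcons_path hp (eU _ Uy).
Qed.


Lemma arcsp_belast v q : zip (belast v q) q = arcsp v q.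
Proof. by elim: q v => [|x q IH] v //=; rewrite IH. Qed.

Lemma closed_cycle v p : path e v p -> last v p = v ->
  cycle e (belast v p) /\ cycle_arcs (belast v p) = arcsp v p.
Proof.
case: p => [|x p] //= hp lv; rewrite /cycle_arcs rot1_cons.
have E1 : rcons (belast x p) v = x :: p by rewrite -lv -lastI.
rewrite /= E1; split => //; by rewrite -(arcsp_belast v (x :: p)).
Qed.

Lemma path_closed (S : seq T) : (forall x y, x \in S -> e x y -> y \in S) ->
  forall q u, u \in S -> path e u q -> last u q \in S.
Proof.
move=> cl; elim=> [|x q IH] u //= uS /andP [eux hq].
exact: IH (cl _ _ uS eux) hq.
Qed.

Lemma outdeg_card w : #|[pred a : T * T | e a.1 a.2 && (a.1 == w)]| = outdeg e w.
Proof.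
have inj : injective (fun y : T => (w, y)) by move=> y1 y2 /(congr1 snd).
rewrite /outdeg -(card_imset _ inj); apply: eq_card => [[a b]].
rewrite inE /=; apply/idP/imsetP.
  case/andP => eab /eqP Ea; subst a; exists b => //; by rewrite inE.
by case=> y; rewrite inE => ewy [-> ->]; rewrite ewy eqxx.
Qed.

Lemma indeg_card w : #|[pred a : T * T | e a.1 a.2 && (a.2 == w)]| = indeg e w.
Proof.
have inj : injective (fun y : T => (y, w)) by move=> y1 y2 /(congr1 fst).
rewrite /indeg -(card_imset _ inj); apply: eq_card => [[a b]].
rewrite inE /=; apply/idP/imsetP.
  case/andP => eab /eqP Ea; subst b; exists a => //; by rewrite inE.
by case=> y; rewrite inE => ewy [-> ->]; rewrite ewy eqxx.
Qed.

Theorem euler_thm : (forall v, outdeg e v = indeg e v) ->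
  (forall u v, exists p, path e u p /\ last u p = v) -> eulerian e.
Proof.
move=> deg conn.
pose E := [pred a : T * T | e a.1 a.2].
have bE : bal E by move=> w; rewrite outdeg_card indeg_card.
case: (boolP [exists a, E a]) => [/existsP [[x0 y0] Ex0] | noarc]; last first.
  exists [::]; split => // x y exy; exfalso.
  by move/existsPn: noarc => /(_ (x, y)); rewrite /= exy.
suff H: forall k v p, #|E| - size p < k -> path e v p -> last v p = v ->
    uniq (arcsp v p) -> eulerian e.
  by apply: (H #|E|.+1 x0 [::]); rewrite ?subn0.
elim=> [//|k IH] v p hk hp lv up.
case: (boolP [forall a, E a ==> (a \in arcsp v p)]) => [/forallP cov | ncov].
  have [cyc carcs] := closed_cycle hp lv.
  exists (belast v p); split => //; rewrite carcs //.
  by move=> x y exy; apply: (implyP (cov (x, y))).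
have: [exists v', (v' \in v :: p) &&
          [exists y, E (v', y) && ((v', y) \notin arcsp v p)]].
  apply: contraT => /existsPn Hn.
  have cl: forall x y, x \in v :: p -> e x y -> y \in v :: p.
    move=> x y xin exy; have := Hn x; rewrite xin /= => /existsPn /(_ y).
    rewrite /= exy /= negbK => /mem_arcsp /andP [_ yin].
    by rewrite in_cons yin orbT.
  move/forallPn: ncov => [[x y]]; rewrite negb_imply => /andP [exy nxy].
  have [q [hq lq]] := conn v x.
  have xin : x \in v :: p.
    by rewrite -lq; apply: (path_closed cl) hq; rewrite mem_head.
  by have := Hn x; rewrite xin /= => /existsPn /(_ y); rewrite (exy : e x y) nxy.
case/existsP => v' /andP [v'in /existsP [y /andP [Ey ny]]].
move: hk hp lv up ny; clear ncov; case/splitPl: v'in => p1 p2 Elast hk hp lv up ny.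
clear p; set p := p1 ++ p2 in hk hp lv up ny *.
pose U' := [pred a | E a && (a \notin arcsp v p)].
have bU' : bal U'.
  move=> w.
  have c1 : forall P : pred (T * T), #|[pred a | E a && P a]| =
      #|[pred a | U' a && P a]| + count P (arcsp v p).
    move=> P; rewrite (count_card _ up) -(cardID (mem (arcsp v p)) [pred a | E a && P a]).
    rewrite addnC; congr (_ + _); apply: eq_card => a; rewrite !inE /=.
      by case: (a \in arcsp v p); rewrite ?andbT ?andbF.
    case ain: (a \in arcsp v p); rewrite ?andbT ?andbF //=.
    by rewrite (path_arcsp hp ain).
  have h1 : #|[pred a | E a && (a.1 == w)]| = #|[pred a | U' a && (a.1 == w)]|
     + count (fun a => a.1 == w) (arcsp v p) := c1 (fun a => a.1 == w).
  have h2 : #|[pred a | E a && (a.2 == w)]| = #|[pred a | U' a && (a.2 == w)]|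
     + count (fun a => a.2 == w) (arcsp v p) := c1 (fun a => a.2 == w).
  have h3 := count_arcsp v p w; rewrite lv in h3; have h4 := bE w.
  rewrite h1 h2 in h4; lia.
have [q [qn hq lq uq aq]] : exists q, [/\ q != [::], path e v' q, last v' q = v',
    uniq (arcsp v' q) & all U' (arcsp v' q)].
  apply: step1 => //; first by move=> a /andP [].
  by exists y; rewrite /= (Ey : e v' y) ny.
rewrite /p cat_path last_cat Elast in hp lv; case/andP: hp => hp1 hp2.
have pe : perm_eq (arcsp v (p1 ++ p2)) (arcsp v' (p2 ++ p1)).
  by rewrite !arcsp_cat Elast lv perm_catC.
have up' : uniq (arcsp v' (p2 ++ p1 ++ q)).
  rewrite catA arcsp_cat cat_uniq -(perm_uniq pe) up /= last_cat lv Elast uq andbT.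
  apply/hasPn => a /(allP aq) /andP [_]; by rewrite -(perm_mem pe).
have hp' : path e v' (p2 ++ p1 ++ q).
  by rewrite catA cat_path last_cat lv Elast hq cat_path lv hp1 hp2.
have aE : all E (arcsp v' (p2 ++ p1 ++ q)).
  by apply/allP => a; apply: path_arcsp.
apply: (IH v' (p2 ++ p1 ++ q)) => //; last by rewrite catA last_cat last_cat lv Elast lq.
have := uniq_size_le up' aE.
rewrite size_arcsp !size_cat; case: q qn {hq lq uq aq up' hp' aE} => // z q _ /=.
rewrite /p size_cat /= in hk; move=> h; set n := #|E| in h hk *; lia.
Qed.

End Euler.

Section Transfer.

Lemma chain_aux (T : eqType) (s : seq T) (x y z w : T) :
  path (fun a b : T * T => a.2 == b.1) (y, x) (rcons (zip (x :: s) (rcons s z)) (z, w)).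
Proof. by elim: s x y => [|s1 s IH] x y /=; rewrite ?eqxx //= IH. Qed.

Lemma cycle_arcs_chain (T : finType) (c : seq T) :
  cycle (fun a b : T * T => a.2 == b.1) (cycle_arcs c).
Proof.
case: c => [|x [|s1 s]] //; rewrite /cycle_arcs rot1_cons /=; first by rewrite eqxx.
exact: (chain_aux s s1 x x s1).
Qed.

Lemma euler_line (T : finType) (e : rel T) : eulerian e -> hamiltonian (@line_arc T e).
Proof.
case=> c [cyc uc cov].
have ae : all (fun a => e a.1 a.2) (cycle_arcs c).
  case: c cyc {uc cov} => [|x s] //= cyc; apply/allP => a.
  rewrite /cycle_arcs rot1_cons -(belast_rcons x s x) arcsp_belast.
  exact: path_arcsp cyc.
pose h : seq (line_vertex e) := pmap insub (cycle_arcs c).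
have hv : map val h = cycle_arcs c.
  rewrite /h (pmap_filter (insubK _)) (eq_filter (isSome_insub _)).
  exact/all_filterP.
exists h; split.
- have -> : @line_arc T e = relpre val (fun a b : T * T => a.2 == b.1) by [].
  by rewrite -cycle_map hv cycle_arcs_chain.
- exact: pmap_sub_uniq.
- by move=> [[x y] /= exy]; rewrite mem_pmap_sub /=; apply: cov.
Qed.

Lemma iso_ham (T1 T2 : finType) (e1 : rel T1) (e2 : rel T2) :
  digraph_iso e1 e2 -> hamiltonian e2 -> hamiltonian e1.
Proof.
case=> f [[g fK gK] fe] [c [cyc uc cov]].
exists (map g c); split.
- rewrite cycle_map; apply: etrans cyc; apply: eq_cycle => x y /=.
  by rewrite -fe !gK.
- by rewrite map_inj_uniq //; apply: can_inj gK.
- by move=> v; rewrite -(fK v) map_f.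
Qed.

End Transfer.

Ltac bsplit := repeat match goal with |- is_true (_ && _) => apply/andP; split end.
Ltac nq := bsplit; try done; try (by rewrite eq_sym).

Definition mkv d (v0 : CKV3 d) (a b c : 'I_d.+1) : CKV3 d := odflt v0 (insub (a, b, c)).

Lemma val_mkv d (v0 : CKV3 d) a b c : [&& a != b, b != c & c != a] ->
  val (mkv v0 a b c) = (a, b, c).
Proof. by move=> h; rewrite /mkv; case: insubP => [w _ -> |] //=; rewrite h. Qed.

Lemma avoid n (s : seq 'I_n) : size s < n -> exists x : 'I_n, x \notin s.
Proof.
move=> hs; have: [exists x, x \notin s]; last by case/existsP => x; exists x.
apply: contraLR hs => /existsPn H; rewrite -leqNgt.
rewrite -{1}(card_ord n); apply: leq_trans (card_size s).
by apply: subset_leq_card; apply/subsetP => x _; have := H x; rewrite negbK.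
Qed.

Lemma dist5 d (hd : 3 <= d) (u v : CKV3 d) : dist_le (@CK3arc d) u v 5.
Proof.
case: u => [[[a b] c] hu]; case: v => [[[p q] r] hv].
have /and3P [hab hbc hca] := hu; have /and3P [hpq hqr hrp] := hv.
set U := (exist _ (a, b, c) hu : CKV3 d); set V := (exist _ (p, q, r) hv : CKV3 d).
have eU : U = mkv U a b c by apply: val_inj; rewrite val_mkv.
have eV : V = mkv U p q r by apply: val_inj; rewrite val_mkv.
rewrite eU eV.
have [z4] := @avoid d.+1 [:: b; c; p] (ltac:(by [])).
rewrite !inE !negb_or => /and3P [h4b h4c h4p].
case: (boolP [exists z5, z5 \notin [:: c; z4; p; q]]).
  case/existsP => z5; rewrite !inE !negb_or => /and4P [h5c h54 h5p h5q].
  exists 5 => //; exists [:: mkv U b c z4; mkv U c z4 z5; mkv U z4 z5 p; mkv U z5 p q; mkv U p q r].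
  split => //=; rewrite /CK3arc !val_mkv /=; nq.
move/existsPn => H.
have Hin : forall x, x \in [:: c; z4; p; q] by move=> x; have := H x; rewrite negbK.
have cover3 : forall x y z : 'I_d.+1, (forall w, w \in [:: x; y; z]) -> False.
  move=> x y z Hw; have [w] := @avoid d.+1 [:: x; y; z] (ltac:(by [])).
  by rewrite Hw.
have := Hin b; rewrite !inE (negbTE hbc) eq_sym (negbTE h4b) /=.
case/orP => /eqP Eb; subst b.
- have hq4 : q != z4.
    apply/negP => /eqP Eq; subst q; apply: (cover3 c z4 p) => w.
    have := Hin w; rewrite !inE.
    by case: (w == c); case: (w == z4); case: (w == p).
  exists 4 => //; exists [:: mkv U p c z4; mkv U c z4 p; mkv U z4 p q; mkv U p q r].
  split => //=; rewrite /CK3arc !val_mkv /=; nq.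
- have hpc : p != c.
    apply/negP => /eqP Ep; subst p; apply: (cover3 c z4 q) => w.
    have := Hin w; rewrite !inE.
    by case: (w == c); case: (w == z4); case: (w == q).
  exists 3 => //; exists [:: mkv U q c p; mkv U c p q; mkv U p q r].
  split => //=; rewrite /CK3arc !val_mkv /=; nq.
Qed.

Lemma sigE3 d (a b c a' b' c' : 'I_d.+1) h h' :
  (exist _ (a, b, c) h : CKV3 d) = exist _ (a', b', c') h' -> [/\ a = a', b = b' & c = c'].
Proof.
move=> /(congr1 val) /= /eqP; rewrite !xpair_eqE.
by case/andP => /andP [/eqP -> /eqP ->] /eqP ->.
Qed.

Lemma nowalk d (x0 x1 x2 : 'I_d.+1) hX hY :
  forall j, j < 5 -> ~ walk_of_length (@CK3arc d)
     (exist _ (x0, x1, x2) hX) (exist _ (x2, x1, x0) hY) j.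
Proof.
have /and3P [/= h01 /= h12 /= h20] := hX.
move=> j hj [s [hp lp sp]].
have vE : forall (w : CKV3 d), exists a b c h, w = exist _ (a, b, c) h.
  by move=> [[[a b] c] h]; exists a, b, c, h.
case: s hp lp sp => [|w1 [|w2 [|w3 [|w4 [|w5 s]]]]] //= hp lp sp; last by subst j.
- case/sigE3: lp => E0 _ _; by rewrite E0 eqxx in h20.
- move: lp hp; have [a1 [b1 [c1 [h1 ->]]]] := vE w1.
  move=> /sigE3 [? ? ?]; subst => /=; rewrite /CK3arc /=; case/andP => /and4P [/eqP E _ _ _] _; by rewrite E eqxx in h12.
- move: lp hp; have [a1 [b1 [c1 [h1 ->]]]] := vE w1; have [a2 [b2 [c2 [h2 ->]]]] := vE w2.
  move=> /sigE3 [? ? ?]; subst => /=; rewrite /CK3arc /=.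
  case/and3P => /and4P [/eqP E1 /eqP E2 _ _] /and4P [/eqP E3 /eqP E4 _ _] _.
  subst; move: h1 => /=; by rewrite eqxx !andbF.
- move: lp hp; have [a1 [b1 [c1 [h1 ->]]]] := vE w1; have [a2 [b2 [c2 [h2 ->]]]] := vE w2.
  have [a3 [b3 [c3 [h3 ->]]]] := vE w3.
  move=> /sigE3 [? ? ?]; subst => /=; rewrite /CK3arc /=.
  case/and4P => /and4P [/eqP E1 /eqP E2 _ _] /and4P [/eqP E3 /eqP E4 _ _]
      /and4P [/eqP E5 /eqP E6 _ _] _.
  subst; move: h1 => /=; by rewrite eqxx !andbF.
- move: lp hp; have [a1 [b1 [c1 [h1 ->]]]] := vE w1; have [a2 [b2 [c2 [h2 ->]]]] := vE w2.
  have [a3 [b3 [c3 [h3 ->]]]] := vE w3; have [a4 [b4 [c4 [h4 ->]]]] := vE w4.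
  move=> /sigE3 [? ? ?]; subst => /=; rewrite /CK3arc /=.
  case/and5P => /and4P [/eqP E1 /eqP E2 _ _] /and4P [/eqP E3 /eqP E4 _ _]
      /and4P [/eqP E5 /eqP E6 _ _] /and4P [/eqP E7 /eqP E8 _ _] _.
  subst; move: h2 => /=; by rewrite eqxx !andbF.
Qed.

Lemma card2c d (b c : 'I_d.+1) : b != c -> #|[set y | (y != b) && (y != c)]| = d - 1.
Proof.
move=> hbc; have := cardsC [set b; c]; rewrite cards2 hbc card_ord.
have -> : ~: [set b; c] = [set y | (y != b) && (y != c)].
  by apply/setP => y; rewrite !inE negb_or.
lia.
Qed.

Lemma cvE d (w : CKV3 d) : exists a b c h, w = exist _ (a, b, c) h.
Proof. by move: w => [[[a b] c] h]; exists a, b, c, h. Qed.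

Lemma outdegCK d (u : CKV3 d) : outdeg (@CK3arc d) u = d - 1.
Proof.
have [a [b [c [hu Eu]]]] := cvE u.
have /and3P [/= hab /= hbc /= hca] := hu.
rewrite /outdeg -(card2c hbc).
have -> : [set w | CK3arc u w] = [set mkv u b c y | y in [set y | (y != b) && (y != c)]].
  apply/setP => w; rewrite inE; apply/idP/imsetP.
    have [x [y [z [hw ->]]]] := cvE w; rewrite /CK3arc Eu /=.
    case/and4P => /eqP Ex /eqP Ey hzb hzc; subst x y.
    exists z; first by rewrite inE hzb hzc.
    by apply: val_inj; rewrite val_mkv //=; nq.
  case=> y; rewrite inE => /andP [hyb hyc] ->.
  rewrite /CK3arc Eu val_mkv /=; nq.
apply: card_in_imset => y1 y2; rewrite !inE => /andP [h1 h1'] /andP [h2 h2'].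
move/(congr1 val); rewrite !val_mkv; try (by nq).
by case.
Qed.

Lemma indegCK d (u : CKV3 d) : indeg (@CK3arc d) u = d - 1.
Proof.
have [a [b [c [hu Eu]]]] := cvE u.
have /and3P [/= hab /= hbc /= hca] := hu.
rewrite /indeg -(card2c hab).
have -> : [set w | CK3arc w u] = [set mkv u y a b | y in [set y | (y != a) && (y != b)]].
  apply/setP => w; rewrite inE; apply/idP/imsetP.
    have [x [y [z [hw ->]]]] := cvE w; rewrite /CK3arc Eu /=.
    case/and4P => /eqP Ex /eqP Ey hzb hzc; subst y z.
    have /and3P [/= hxa _ /= hbx] := hw.
    exists x; first by rewrite inE hxa eq_sym hbx.
    by apply: val_inj; rewrite val_mkv //=; nq.
  case=> y; rewrite inE => /andP [hya hyb] ->.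
  rewrite /CK3arc Eu val_mkv /=; nq.
apply: card_in_imset => y1 y2; rewrite !inE => /andP [h1 h1'] /andP [h2 h2'].
move/(congr1 val); rewrite !val_mkv; try (by nq).
by case.
Qed.

Lemma card_pairs d : #|[pred i : 'I_d.+1 * 'I_d.+1 | i.1 != i.2]| = d.+1 * d.
Proof.
rewrite -sum1_card.
transitivity (\sum_(a : 'I_d.+1) \sum_(b : 'I_d.+1 | a != b) 1).
  by rewrite pair_big_dep; apply: eq_bigl => p.
rewrite (eq_bigr (fun _ => d)) ?sum_nat_const ?card_ord //.
move=> a _; rewrite sum1_card.
have := cardsC [set a]; rewrite cards1 card_ord => h.
rewrite -(eq_card (A := ~: [set a])) ?(addnK) //; first lia.
by move=> b; rewrite !inE eq_sym.
Qed.

Lemma card_CKV3 d : #|CKV3 d| = d.+1 * d * (d - 1).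
Proof.
rewrite card_sig -sum1_card.
transitivity (\sum_(i : 'I_d.+1 * 'I_d.+1 | i.1 != i.2)
                 \sum_(c : 'I_d.+1 | (i.2 != c) && (c != i.1)) 1).
  by rewrite pair_big_dep; apply: eq_bigl => p.
rewrite (eq_bigr (fun _ => d - 1)).
  by rewrite sum_nat_const card_pairs.
move=> [a b] /= hab; rewrite sum1_card -(card2c hab).
by apply: eq_card => c; rewrite !inE unfold_in /= (eq_sym b) andbC.
Qed.

Lemma num_arcs_sum (T : finType) (e : rel T) : num_arcs e = \sum_(u : T) outdeg e u.
Proof.
rewrite /num_arcs -sum1_card.
transitivity (\sum_(u : T) \sum_(w : T | e u w) 1).
  by rewrite pair_big_dep; apply: eq_bigl => p; rewrite inE.
apply: eq_bigr => u _; rewrite sum1_card /outdeg.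
by apply: eq_card => w; rewrite inE.
Qed.

Definition mk2 d (w0 : KV2 d) (a b : 'I_d.+1) : KV2 d := odflt w0 (insub (a, b)).

Lemma val_mk2 d (w0 : KV2 d) a b : a != b -> val (mk2 w0 a b) = (a, b).
Proof. by move=> h; rewrite /mk2; case: insubP => [w _ -> |] //=; rewrite h. Qed.

Definition mkl d (l0 : line_vertex (@sK2arc d)) (u w : KV2 d) : line_vertex (@sK2arc d) :=
  odflt l0 (insub (u, w)).

Lemma val_mkl d l0 (u w : KV2 d) : sK2arc u w -> val (mkl l0 u w) = (u, w).
Proof. by move=> h; rewrite /mkl; case: insubP => [z _ -> |] //=; rewrite h. Qed.

Lemma kvE d (w : KV2 d) : exists a b h, w = exist _ (a, b) h.
Proof. by move: w => [[a b] h]; exists a, b, h. Qed.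

Lemma digon_part d (u v : KV2 d) : sK2arc u v = K2arc u v && ~~ K2arc_in_digon u v.
Proof.
have [a [b [hu ->]]] := kvE u; have [c [e [hv ->]]] := kvE v.
rewrite /K2arc_in_digon /sK2arc /K2arc /=.
move: (hu) (hv) => /= hab hce.
case: (b =P c) => [Ebc|] //=; subst c.
case: (e =P a) => [Eea|hea] /=; last first.
  by case: (e == b).
subst e; rewrite hab (eq_sym b a) hab /=.
suff -> : exist (fun x : 'I_d.+1 * 'I_d.+1 => x.1 != x.2) (a, b) hu
      != exist (fun x : 'I_d.+1 * 'I_d.+1 => x.1 != x.2) (b, a) hv by [].
apply/negP => /eqP /(congr1 val) /= /eqP; rewrite xpair_eqE => /andP [/eqP Eab _].
by rewrite Eab eqxx in hab.
Qed.

Lemma isoCK d (v0 : CKV3 d) (w0 : KV2 d) (l0 : line_vertex (@sK2arc d)) :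
  digraph_iso (@CK3arc d) (@line_arc (KV2 d) (@sK2arc d)).
Proof.
pose f (x : CKV3 d) := mkl l0 (mk2 w0 (val x).1.1 (val x).1.2) (mk2 w0 (val x).1.2 (val x).2).
pose g (l : line_vertex (@sK2arc d)) :=
  mkv v0 (val (val l).1).1 (val (val l).1).2 (val (val l).2).2.
have vf : forall x : CKV3 d, exists a b c, [/\ val x = (a, b, c),
    [&& a != b, b != c & c != a] &
    val (f x) = (mk2 w0 a b, mk2 w0 b c)].
  move=> x; have [a [b [c [h ->]]]] := cvE x.
  have /and3P [/= hab /= hbc /= hca] := h.
  exists a, b, c; split => //.
  rewrite val_mkl //= /sK2arc !val_mk2 //=; nq.
exists f; split.
  exists g.
    move=> x; have [a [b [c [vx hx vfx]]]] := vf x.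
    have /and3P [hab hbc hca] := hx.
    by apply: val_inj; rewrite /g vfx /= !val_mk2 //= val_mkv // vx.
  case=> [[u w] huw].
  have [a [b [hu Eu]]] := kvE u; have [b' [c [hw Ew]]] := kvE w; subst u w.
  have /and3P [/eqP /= Eb /= hca /= hcb] := huw; subst b'.
  have /= hab := hu; have /= hbc := hw.
  have vg : val (g (exist _ (exist _ (a, b) hu, exist _ (b, c) hw) huw)) = (a, b, c).
    by rewrite /g val_mkv //=; nq.
  apply: val_inj; rewrite /f vg /= val_mkl /=; last first.
    rewrite /sK2arc !val_mk2 //=; nq.
  by congr pair; apply: val_inj; rewrite val_mk2.
move=> x y.
have [a [b [c [vx hx vfx]]]] := vf x; have [a' [b' [c' [vy hy vfy]]]] := vf y.
have /and3P [hab hbc hca] := hx; have /and3P [hab' hbc' hca'] := hy.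
rewrite /line_arc vfx vfy /= /CK3arc vx vy /= -(inj_eq val_inj) !val_mk2 //.
rewrite xpair_eqE (eq_sym b a') (eq_sym c b').
case: (a' =P b) => //= Ea; case: (b' =P c) => //= Eb; subst a' b'.
by rewrite hca' eq_sym hbc'.
Qed.

Lemma perm3 n (a b c p q r : 'I_n) : a != b -> b != c -> c != a ->
  p != q -> q != r -> r != p ->
  exists s : {perm 'I_n}, [/\ s a = p, s b = q & s c = r].
Proof.
move=> hab hbc hca hpq hqr hrp.
pose t1 := tperm a p; pose b1 := t1 b; pose t2 := tperm b1 q.
pose c2 := t2 (t1 c); pose t3 := tperm c2 r.
have e1 : t1 a = p by rewrite /t1 tpermL.
have hb1 : b1 != p by rewrite /b1 -e1 (inj_eq perm_inj) eq_sym.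
have e2 : t2 p = p by rewrite /t2 tpermD // eq_sym.
have e2' : t2 b1 = q by rewrite /t2 tpermL.
have hc2p : c2 != p by rewrite /c2 -e2 -e1 !(inj_eq perm_inj).
have hc2q : c2 != q by rewrite /c2 -e2' /b1 !(inj_eq perm_inj) eq_sym.
exists (t1 * t2 * t3)%g; rewrite !permM; split.
- by rewrite e1 e2 /t3 tpermD // eq_sym.
- by rewrite -/b1 e2' /t3 tpermD // eq_sym.
- by rewrite -/c2 /t3 tpermL.
Qed.

Definition fs d (v0 : CKV3 d) (s : {perm 'I_d.+1}) (x : CKV3 d) : CKV3 d :=
  mkv v0 (s (val x).1.1) (s (val x).1.2) (s (val x).2).

Lemma val_fs d v0 s (x : CKV3 d) : val (fs v0 s x) = (s (val x).1.1, s (val x).1.2, s (val x).2).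
Proof.
have [a [b [c [h ->]]]] := cvE x; have /and3P [/= hab /= hbc /= hca] := h.
by rewrite val_mkv //= !(inj_eq perm_inj) hab hbc hca.
Qed.

Lemma vtCK d (u v : CKV3 d) : exists f : CKV3 d -> CKV3 d,
  [/\ bijective f, (forall x y, CK3arc (f x) (f y) = CK3arc x y) & f u = v].
Proof.
have [a [b [c [hu Eu]]]] := cvE u; have [p [q [r [hv Ev]]]] := cvE v.
have /and3P [/= hab /= hbc /= hca] := hu; have /and3P [/= hpq /= hqr /= hrp] := hv.
have [s [sa sb sc]] := perm3 hab hbc hca hpq hqr hrp.
exists (fs u s); split.
- exists (fs u s^-1) => x; apply: val_inj; rewrite !val_fs /= ?permK ?permKV;
    by case: (val x) => [[]].
- by move=> x y; rewrite /CK3arc !val_fs /= !(inj_eq perm_inj).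
- by apply: val_inj; rewrite val_fs Eu Ev /= sa sb sc.
Qed.

Lemma outdegSK d (u : KV2 d) : outdeg (@sK2arc d) u = d - 1.
Proof.
have [a [b [hu Eu]]] := kvE u; have /= hab := hu.
rewrite /outdeg -(card2c hab).
have -> : [set w | sK2arc u w] = [set mk2 u b y | y in [set y | (y != a) && (y != b)]].
  apply/setP => w; rewrite inE; apply/idP/imsetP.
    have [x [y [hw ->]]] := kvE w; rewrite /sK2arc Eu /=.
    case/and3P => /eqP Ex hya hyb; subst x.
    exists y; first by rewrite inE hya hyb.
    by apply: val_inj; rewrite val_mk2 //= eq_sym.
  case=> y; rewrite inE => /andP [hya hyb] ->.
  rewrite /sK2arc Eu val_mk2 /=; nq.
apply: card_in_imset => y1 y2; rewrite !inE => /andP [h1 h1'] /andP [h2 h2'].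
move/(congr1 val); rewrite !val_mk2; try (by nq).
by case.
Qed.

Lemma indegSK d (u : KV2 d) : indeg (@sK2arc d) u = d - 1.
Proof.
have [a [b [hu Eu]]] := kvE u; have /= hab := hu.
rewrite /indeg -(card2c hab).
have -> : [set w | sK2arc w u] = [set mk2 u y a | y in [set y | (y != a) && (y != b)]].
  apply/setP => w; rewrite inE; apply/idP/imsetP.
    have [x [y [hw ->]]] := kvE w; rewrite /sK2arc Eu /=.
    case/and3P => /eqP Ey hbx hby; subst y.
    exists x; first by rewrite inE hw eq_sym hbx.
    by apply: val_inj; rewrite val_mk2.
  case=> y; rewrite inE => /andP [hya hyb] ->.
  rewrite /sK2arc Eu val_mk2 /=; nq.
apply: card_in_imset => y1 y2; rewrite !inE => /andP [h1 h1'] /andP [h2 h2'].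
move/(congr1 val); rewrite !val_mk2; try (by nq).
by case.
Qed.

Lemma connCK d (hd : 3 <= d) (u v : CKV3 d) :
  exists p, path (@CK3arc d) u p /\ last u p = v.
Proof.
have [j _ [p [hp lp _]]] := dist5 hd u v.
by exists p.
Qed.

Lemma connSK d (hd : 3 <= d) (u v : KV2 d) :
  exists p, path (@sK2arc d) u p /\ last u p = v.
Proof.
have [a [b [hu Eu]]] := kvE u; have [p [q [hv Ev]]] := kvE v.
have /= hab := hu; have /= hpq := hv.
have [x] := @avoid d.+1 [:: a; b] (ltac:(rewrite /=; lia)).
rewrite !inE negb_or => /andP [hxa hxb].
have [y] := @avoid d.+1 [:: p; q] (ltac:(rewrite /=; lia)).
rewrite !inE negb_or => /andP [hyp hyq].
have hU : [&& a != b, b != x & x != a] by nq.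
have hV : [&& y != p, p != q & q != y] by nq.
have [s [hs ls]] := connCK hd (exist _ (a, b, x) hU) (exist _ (y, p, q) hV).
pose pi (w : CKV3 d) := mk2 u (val w).1.2 (val w).2.
have pin : forall w : CKV3 d, val (mk2 u (val w).1.2 (val w).2) = ((val w).1.2, (val w).2).
  move=> w; have [a' [b' [c' [h ->]]]] := cvE w; have /and3P [_ /= h' _] := h.
  by rewrite val_mk2.
exists (pi (exist _ (a, b, x) hU) :: map pi s); split.
- rewrite /= -/(pi _) path_map; apply/andP; split.
    by rewrite /sK2arc Eu /pi pin /=; nq.
  apply: sub_path hs => w z; rewrite /relpre /= /sK2arc /CK3arc /pi !pin.
  case/and4P => _ /eqP -> h1 h2; rewrite eqxx /=; nq.
- rewrite /= last_map ls; apply: val_inj; rewrite /pi pin Ev.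
  done.
Qed.

Lemma letters3 d (hd : 2 <= d) : exists x0 x1 x2 : 'I_d.+1, [/\ x0 != x1, x1 != x2 & x2 != x0].
Proof.
exists (inord 0), (inord 1), (inord 2).
by split; apply/eqP => /(congr1 (@nat_of_ord _)); rewrite !inordK //; lia.
Qed.

Theorem mainTheorem13 (d : nat) (hd : 3 <= d) :
  (* (a) *) regular_digraph (@CK3arc d) (d - 1) /\
  (* (b) *) (#|CKV3 d| = d ^ 3 - d /\ num_arcs (@CK3arc d) = d.+1 * d * (d - 1) ^ 2) /\
  (* (c) *) diameter_is (@CK3arc d) 5 /\
  (* (d) *) (digraph_iso (@CK3arc d) (@line_arc (KV2 d) (@sK2arc d)) /\
             (forall u v : KV2 d, sK2arc u v = K2arc u v && ~~ K2arc_in_digon u v)) /\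
  (* (e) *) vertex_transitive (@CK3arc d) /\
  (* (f) *) (eulerian (@CK3arc d) /\ hamiltonian (@CK3arc d)).
Proof.
have [x0 [x1 [x2 [h01 h12 h20]]]] := letters3 (ltnW hd).
have hX : [&& x0 != x1, x1 != x2 & x2 != x0] by nq.
have hY : [&& x2 != x1, x1 != x0 & x0 != x2] by nq.
pose v0 : CKV3 d := exist _ (x0, x1, x2) hX.
pose w0 : KV2 d := exist _ (x0, x1) h01.
pose w1 : KV2 d := exist _ (x1, x2) h12.
have hl : sK2arc w0 w1 by rewrite /sK2arc /=; nq.
pose l0 : line_vertex (@sK2arc d) := exist _ (w0, w1) hl.
have d3 : d ^ 3 = d * d * d by rewrite !expnS expn0 muln1 mulnA.
split; first by move=> v; rewrite outdegCK indegCK.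
split.
  split; first by rewrite card_CKV3 d3; nia.
  rewrite num_arcs_sum (eq_bigr (fun _ => d - 1)); last by move=> u _; exact: outdegCK.
  rewrite sum_nat_const card_CKV3 !expnS expn0 muln1; nia.
split.
  split; first by move=> u v; exact: dist5.
  exists v0, (exist _ (x2, x1, x0) hY); exact: nowalk.
split; first by split; [exact: isoCK v0 w0 l0 | exact: digon_part].
split; first by move=> u v; exact: vtCK.
split.
  apply: euler_thm => [v|]; [by rewrite outdegCK indegCK | exact: connCK].
apply: (iso_ham (isoCK v0 w0 l0)); apply: euler_line.
apply: euler_thm => [v|]; [by rewrite outdegSK indegSK | exact: connSK].
Qed.
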